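(* Consider only finite-dimensional Hilbert spaces $E$ (i.e. $E=\mathbb{C}^n$, $n\geq1$). Let $(D(E))$ be a free set with $D(E)\subseteq\mathcal{B}(E)^k$ such that each $D(E)$ contains an open neighborhood of $0$, and let $F:D(E)\to\mathcal{B}(E)$ be a free function which is complex-linear, i.e. $F(\alpha X+\beta Y)=\alpha F(X)+\beta F(Y)$ whenever $\alpha,\beta\in\mathbb{C}$ and $X,Y,\alpha X+\beta Y\in D(E)$. Then there exist $a_1,\dots,a_k\in\mathbb{C}$ (independent of $E$) such that $$F(X)=\sum_{j=1}^k a_jX_j\qquad\text{for all } X\in D(E)\text{ and all } E.$$
   Context: $\mathcal{B}(E)$: linear operators on $E$. A free set is a collection $(D(E))$ with $U^*D(E)U\subseteq D(K)$ for unitaries $U:K\to E$ (where $U^*XU=(U^*X_1U,\dots,U^*X_kU)$) and $D(E)\oplus D(K)\subseteq D(E\oplus K)$. A free function $F:D(E)\to\mathcal{B}(E)$ satisfies $F(U^*A_1U,\dots,U^*A_kU)=U^*F(A)U$ for unitaries $U$ and $F(A_1\oplus B_1,\dots,A_k\oplus B_k)=F(A)\oplus F(B)$. *)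

(* Defs.v *)
(* Complex scalars: an arbitrary numClosedFieldType C. *)
From HB Require Import structures.
From mathcomp Require Import all_boot all_order all_algebra.
Set Implicit Arguments. Unset Strict Implicit. Unset Printing Implicit Defensive.
Import Order.TTheory GRing.Theory Num.Theory.
Local Open Scope ring_scope.

Definition adjmx (C : numClosedFieldType) (n : nat) (A : 'M[C]_n) : 'M[C]_n :=
  (map_mx Num.conj A)^T.

Definition unitary_mx (C : numClosedFieldType) (n : nat) (U : 'M[C]_n) : Prop :=
  adjmx U *m U = 1%:M /\ U *m adjmx U = 1%:M.

Definition tup (C : numClosedFieldType) (k n : nat) := 'I_k -> 'M[C]_n.

Definition free_set (C : numClosedFieldType) (k : nat)
  (D : forall n : nat, tup C k n -> Prop) : Prop :=
  (forall (n : nat) (U : 'M[C]_n) (X : tup C k n), (0 < n)%N ->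
     unitary_mx U -> D n X -> D n (fun j => adjmx U *m X j *m U)) /\
  (forall (n m : nat) (X : tup C k n) (Y : tup C k m), (0 < n)%N -> (0 < m)%N ->
     D n X -> D m Y -> D (n + m)%N (fun j => block_mx (X j) 0 0 (Y j))).

Definition free_fun (C : numClosedFieldType) (k : nat)
  (D : forall n : nat, tup C k n -> Prop)
  (F : forall n : nat, tup C k n -> 'M[C]_n) : Prop :=
  (forall (n : nat) (U : 'M[C]_n) (X : tup C k n), (0 < n)%N ->
     unitary_mx U -> D n X ->
     F n (fun j => adjmx U *m X j *m U) = adjmx U *m F n X *m U) /\
  (forall (n m : nat) (X : tup C k n) (Y : tup C k m), (0 < n)%N -> (0 < m)%N ->
     D n X -> D m Y ->
     F (n + m)%N (fun j => block_mx (X j) 0 0 (Y j)) = block_mx (F n X) 0 0 (F m Y)).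

(* D n contains an open neighbourhood of 0 in B(C^n)^k (entrywise sup norm,
   equivalent to any norm topology in finite dimension). *)
Definition contains_nbhd0 (C : numClosedFieldType) (k n : nat)
  (Dn : tup C k n -> Prop) : Prop :=
  exists eps : C, 0 < eps /\
    forall X : tup C k n, (forall j i l, `|X j i l| < eps) -> Dn X.

Definition linear_on (C : numClosedFieldType) (k : nat)
  (D : forall n : nat, tup C k n -> Prop)
  (F : forall n : nat, tup C k n -> 'M[C]_n) : Prop :=
  forall (n : nat) (a b : C) (X Y : tup C k n), (0 < n)%N ->
    D n X -> D n Y -> D n (fun j => a *: X j + b *: Y j) ->
    F n (fun j => a *: X j + b *: Y j) = a *: F n X + b *: F n Y.

(* Main.v *)
Require Import Defs.
From HB Require Import structures.
From mathcomp Require Import all_boot all_order all_algebra.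
From mathcomp Require Import sesquilinear spectral.
Import Order.TTheory GRing.Theory Num.Theory.
Local Open Scope ring_scope.

Lemma adjmxE (C : numClosedFieldType) n (A : 'M[C]_n) : adjmx A = (A ^t*)%sesqui.
Proof. by rewrite /adjmx map_trmx. Qed.

Lemma adjmxK (C : numClosedFieldType) n (A : 'M[C]_n) : adjmx (adjmx A) = A.
Proof. by apply/matrixP => i j; rewrite !mxE Num.Theory.conjCK. Qed.

Lemma adjmxL (C : numClosedFieldType) n (a b : C) (A B : 'M[C]_n) :
  adjmx (a *: A + b *: B) = Num.conj a *: adjmx A + Num.conj b *: adjmx B.
Proof. by apply/matrixP => i j; rewrite !mxE rmorphD !rmorphM. Qed.

Lemma g_char (C : numClosedFieldType) (g : forall n, 'M[C]_n -> 'M[C]_n)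
 (glin : forall n a b A B, (0 < n)%N -> g n (a *: A + b *: B) = a *: g n A + b *: g n B)
 (geq : forall n U A, (0 < n)%N -> unitary_mx U ->
     g n (adjmx U *m A *m U) = adjmx U *m g n A *m U)
 (gblk : forall m A B, (0 < m)%N ->
     g (1 + m)%N (block_mx A 0 0 B) = block_mx (g 1%N A) 0 0 (g m B)) :
 forall n A, (0 < n)%N -> g n A = (g 1%N 1%:M 0 0) *: A.
Proof.
set a := g 1%N 1%:M 0 0.
have gZ n c A : (0 < n)%N -> g n (c *: A) = c *: g n A.
  move=> n0; have := glin n c 0 A 0 n0; rewrite !scale0r !addr0 => ->.
  done.
have gD n A B : (0 < n)%N -> g n (A + B) = g n A + g n B.
  by move=> n0; have := glin n 1 1 A B n0; rewrite !scale1r.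
have dim1 A : g 1%N A = a *: A.
  have -> : A = (A 0 0) *: 1%:M by rewrite scalemx1 -mx11_scalar.
  rewrite gZ //.
  have -> : g 1%N 1%:M = a *: 1%:M by rewrite scalemx1 -mx11_scalar.
  by rewrite !scalerA mulrC.
have diag m : forall d, g m.+1 (diag_mx d) = a *: diag_mx d.
  elim: m => [|m IH] d; first exact: dim1.
  pose d' : 'rV_(1 + m.+1) := d.
  have -> : diag_mx d = diag_mx (row_mx (lsubmx d') (rsubmx d')) by rewrite hsubmxK.
  rewrite diag_mx_row (gblk m.+1) // dim1 IH.
  have := scale_block_mx a (diag_mx (lsubmx d')) 0 0 (diag_mx (rsubmx d')).
  by rewrite !scaler0 => ->.
have normal n A : (0 < n)%N -> A \is normalmx -> g n A = a *: A.
  case: n A => // m' A _ /orthomx_spectralP ->.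
  set P := spectralmx A.
  have Pu : P \is unitarymx by apply: spectral_unitarymx.
  rewrite invmx_unitary // -adjmxE.
  have Uu : unitary_mx P.
    by split; [apply: mulmx1C|]; rewrite adjmxE; apply/unitarymxP.
  by rewrite geq // diag -scalemxAr -scalemxAl.
move=> n A n0.
pose H := 2^-1 *: A + 2^-1 *: adjmx A.
pose K := 2^-1 *: A + (- 2^-1) *: adjmx A.
have c2 : Num.conj (2^-1 : C) = 2^-1 by rewrite fmorphV /= (conjC_nat _ 2).
have two0 : (2 : C) != 0 by rewrite pnatr_eq0.
have HK : A = H + K.
  rewrite /H /K addrACA scaleNr addrN addr0 -scalerDr -mulr2n -scaler_nat.
  by rewrite scalerA mulVf // scale1r.
have Hn : H \is normalmx.
  have aH : adjmx H = H by rewrite /H adjmxL adjmxK c2 addrC.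
  by apply/normalmxP; rewrite -adjmxE aH.
have Kn : K \is normalmx.
  have aK : adjmx K = - K.
    rewrite /K adjmxL adjmxK rmorphN c2 opprD !scaleNr opprK addrC.
    congr (- (_ *: _) + _); exact c2.
  apply/normalmxP; rewrite -adjmxE aK.
  by rewrite mulmxN mulNmx.
have -> : g n A = g n (H + K) by rewrite -HK.
by rewrite gD // !normal // -scalerDr -HK.
Qed.
From Stdlib Require Import FunctionalExtensionality ClassicalEpsilon.
Definition tsc (C : numClosedFieldType) k n (c : C) (X : tup C k n) : tup C k n :=
  fun j => c *: X j.
Arguments tsc {C k n}.

Lemma le_sum1 (C : numClosedFieldType) (I : finType) (f : I -> C) i :
  (forall j, 0 <= f j) -> f i <= \sum_j f j.
Proof. by move=> f0; rewrite (bigD1 i) //= lerDl sumr_ge0. Qed.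

Arguments le_sum1 {C I}.

Lemma exists_le2 (C : numClosedFieldType) (r1 r2 : C) : 0 < r1 -> 0 < r2 ->
  exists r, 0 < r /\ r <= r1 /\ r <= r2.
Proof.
move=> h1 h2; exists (r1 * r2 / (r1 + r2)).
have h12 : 0 < r1 + r2 by rewrite addr_gt0.
split; first by rewrite divr_gt0 ?mulr_gt0.
split; rewrite ler_pdivrMr //.
  by rewrite ler_pM2l // lerDr ltW.
by rewrite mulrC ler_pM2l // lerDl ltW.
Qed.

Arguments exists_le2 {C r1 r2}.

Lemma small (C : numClosedFieldType) k (D : forall n : nat, tup C k n -> Prop) n
  (X : tup C k n) : contains_nbhd0 (D n) ->
  exists r : C, 0 < r /\ forall c : C, `|c| <= r -> D n (tsc c X).
Proof.
move=> [eps [eps0 ball]].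
pose S := \sum_j \sum_i \sum_l `|X j i l|.
have S0 : 0 <= S.
  by apply/sumr_ge0 => j _; apply/sumr_ge0 => i _; apply/sumr_ge0 => l _.
have S1 : 0 < S + 1 by apply: ltr_wpDl S0 ltr01.
exists (eps / (S + 1)); split; first by rewrite divr_gt0.
move=> c hc; apply: ball => j i l.
Show.
rewrite /tsc mxE normrM.
have hx : `|X j i l| <= S.
  have p0 j' i' : 0 <= \sum_l `|X j' i' l| by apply/sumr_ge0 => ? _.
  have h1 := le_sum1 (fun l => `|X j i l|) l (fun _ => normr_ge0 _).
  have h2 := le_sum1 (fun i' => \sum_l `|X j i' l|) i (p0 j).
  have h3 := le_sum1 (fun j' => \sum_i' \sum_l `|X j' i' l|) j
     (fun j' => sumr_ge0 _ (fun i' _ => p0 j' i')).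
  exact: le_trans h1 (le_trans h2 h3).
apply: le_lt_trans (ler_pM _ _ hc hx) _ => //.
by rewrite mulrAC ltr_pdivrMr // ltr_pM2l // ltrDl ltr01.
Qed.

Arguments small {C k D n}.

Theorem mainTheorem12 (C : numClosedFieldType) (k : nat)
  (D : forall n : nat, tup C k n -> Prop)
  (F : forall n : nat, tup C k n -> 'M[C]_n) :
  free_set D ->
  (forall n : nat, (0 < n)%N -> contains_nbhd0 (D n)) ->
  free_fun D F ->
  linear_on D F ->
  exists a : 'I_k -> C,
    forall (n : nat) (X : tup C k n), (0 < n)%N -> D n X ->
      F n X = \sum_(j < k) a j *: X j.
Proof.
move=> [Dconj Dblk] Hnb [Fconj Fblk] Flin.
have Sc n (X : tup C k n) c c' : (0 < n)%N -> c != 0 -> c' != 0 ->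
    D n (tsc c X) -> D n (tsc c' X) ->
    c^-1 *: F n (tsc c X) = c'^-1 *: F n (tsc c' X).
  move=> n0 c0 c'0 Dc Dc'.
  have E : (fun j => (c' / c) *: tsc c X j + 0 *: tsc c X j) = tsc c' X.
    by apply: functional_extensionality => j; rewrite /tsc scale0r addr0 scalerA divfK.
  have := Flin n (c' / c) 0 (tsc c X) (tsc c X) n0 Dc Dc; rewrite E => /(_ Dc') ->.
  by rewrite scale0r addr0 scalerA mulKf.
have pc n (X : tup C k n) : {c : C | (0 < n)%N -> c != 0 /\ D n (tsc c X)}.
  apply: constructive_indefinite_description.
  case: n X => [|n] X; first by exists 0.
  have n0 : (0 < n.+1)%N by [].
  have [r [r0 hr]] := small X (Hnb n.+1 n0).
  by exists r => _; split; [rewrite lt0r_neq0 | apply: hr; rewrite ger0_norm // ltW].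
pose L n (X : tup C k n) := (sval (pc n X))^-1 *: F n (tsc (sval (pc n X)) X).
have L1 n X c : (0 < n)%N -> c != 0 -> D n (tsc c X) -> L n X = c^-1 *: F n (tsc c X).
  move=> n0 c0 Dc; rewrite /L; case: (pc n X) => c' /= /(_ n0) [c'0 Dc'].
  exact: Sc.
have LD n X : (0 < n)%N -> D n X -> F n X = L n X.
  move=> n0 DX; have E : tsc 1 X = X.
    by apply: functional_extensionality => j; rewrite /tsc scale1r.
  by rewrite (L1 n X 1) ?oner_eq0 ?E // invr1 scale1r.
have small3 n (X Y Z : tup C k n) : (0 < n)%N -> exists r, 0 < r /\
    D n (tsc r X) /\ D n (tsc r Y) /\ D n (tsc r Z).
  move=> n0.
  have [r1 [r10 h1]] := small X (Hnb n n0).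
  have [r2 [r20 h2]] := small Y (Hnb n n0).
  have [r3 [r30 h3]] := small Z (Hnb n n0).
  have [r4 [r40 [r41 r42]]] := exists_le2 r10 r20.
  have [r [r0 [r4' r3']]] := exists_le2 r40 r30.
  have nr : `|r| = r by rewrite ger0_norm // ltW.
  exists r; split => //.
  split; [apply: h1|split; [apply: h2|apply: h3]]; rewrite nr.
  - exact: le_trans r4' r41.
  - exact: le_trans r4' r42.
  - exact: r3'.
have Lin n a b (X Y : tup C k n) : (0 < n)%N ->
    L n (fun j => a *: X j + b *: Y j) = a *: L n X + b *: L n Y.
  move=> n0; set Z := fun j => a *: X j + b *: Y j.
  have [r [r0 [DX [DY DZ]]]] := small3 n X Y Z n0.
  have rn0 : r != 0 by rewrite lt0r_neq0.
  have E : (fun j => a *: tsc r X j + b *: tsc r Y j) = tsc r Z.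
    apply: functional_extensionality => j.
    by rewrite /tsc /Z scalerDr !scalerA mulrC (mulrC r b).
  have := Flin n a b (tsc r X) (tsc r Y) n0 DX DY; rewrite E => /(_ DZ) FZ.
  rewrite (L1 n Z r) // (L1 n X r) // (L1 n Y r) // FZ.
  by rewrite scalerDr !scalerA mulrC (mulrC r^-1 b).
have Leq n U (X : tup C k n) : (0 < n)%N -> unitary_mx U ->
    L n (fun j => adjmx U *m X j *m U) = adjmx U *m L n X *m U.
  move=> n0 Uu; case: (pc n X) => c /(_ n0) [c0 Dc].
  have E : tsc c (fun j => adjmx U *m X j *m U) = (fun j => adjmx U *m tsc c X j *m U).
    apply: functional_extensionality => j.
    by rewrite /tsc -scalemxAr -scalemxAl.
  rewrite (L1 n _ c) // ?E ?Fconj // ?(L1 n X c) //; last exact: Dconj.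
  by rewrite -scalemxAr -scalemxAl.
have Lblk m (X : tup C k 1) (Y : tup C k m) : (0 < m)%N ->
    L (1 + m)%N (fun j => block_mx (X j) 0 0 (Y j)) = block_mx (L 1%N X) 0 0 (L m Y).
  move=> m0.
  have [r1 [r10 h1]] := small X (Hnb 1%N isT).
  have [r2 [r20 h2]] := small Y (Hnb m m0).
  have [r [r0 [r1' r2']]] := exists_le2 r10 r20.
  have nr : `|r| = r by rewrite ger0_norm // ltW.
  have rn0 : r != 0 by rewrite lt0r_neq0.
  have DX : D 1%N (tsc r X) by apply: h1; rewrite nr.
  have DY : D m (tsc r Y) by apply: h2; rewrite nr.
  have E : tsc r (fun j => block_mx (X j) 0 0 (Y j)) =
           (fun j => block_mx (tsc r X j) 0 0 (tsc r Y j)).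
    apply: functional_extensionality => j.
    by rewrite /tsc scale_block_mx !scaler0.
  rewrite (L1 _ _ r) // ?E ?Fblk // ?(L1 1%N X r) // ?(L1 m Y r) //; last exact: Dblk.
  by rewrite scale_block_mx !scaler0.
have L0 n : (0 < n)%N -> L n (fun _ => 0) = 0.
  move=> n0; have := Lin n 0 0 (fun _ => 0) (fun _ => 0) n0.
  by rewrite !scale0r addr0.
have Lsum n (r : seq 'I_k) (f : 'I_k -> tup C k n) : (0 < n)%N ->
    L n (fun i => \sum_(j <- r) f j i) = \sum_(j <- r) L n (f j).
  move=> n0; elim: r => [|j0 r IH].
    have -> : (fun i => \sum_(j <- [::]) f j i) = (fun _ => 0).
      by apply: functional_extensionality => i; rewrite big_nil.
    by rewrite L0 // big_nil.
  have -> : (fun i => \sum_(j <- j0 :: r) f j i) =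
      (fun i => 1 *: f j0 i + 1 *: \sum_(j <- r) f j i).
    by apply: functional_extensionality => i; rewrite big_cons !scale1r.
  by rewrite Lin // IH big_cons !scale1r.
pose g (j : 'I_k) n (A : 'M[C]_n) := L n (fun i => (i == j)%:R *: A).
have gc j := @g_char _ (g j).
exists (fun j => g j 1%N 1%:M 0 0) => n X n0 DX.
rewrite LD //.
have EX : X = (fun i => \sum_(j <- index_enum 'I_k) (fun i => (i == j)%:R *: X j) i).
  apply: functional_extensionality => i.
  rewrite (bigD1 i) //= eqxx scale1r big1 ?addr0 // => j /negbTE.
  by rewrite eq_sym => ->; rewrite scale0r.
rewrite {1}EX Lsum //; apply: eq_bigr => j _.
rewrite /= -/(g j n (X j)) gc //.
- move=> n' a b A B n'0; rewrite /g -Lin //; congr (L n' _).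
  apply: functional_extensionality => i.
  by rewrite scalerDr !scalerA mulrC (mulrC _ b).
- move=> n' U A n'0 Uu; rewrite /g -Leq //; congr (L n' _).
  apply: functional_extensionality => i.
  by rewrite -scalemxAr -scalemxAl.
- move=> m A B m0; rewrite /g -Lblk //; congr (L _ _).
  apply: functional_extensionality => i.
  by rewrite scale_block_mx !scaler0.
Qed.
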